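(* Let $T$ be a balanced eulerian tree and let $T'$ be its balanced conjugate (the eulerian tree obtained from $T$ by re-rooting it at the other free leaf). Then the closure $\sigma(T')$ is the map obtained from the closure $\sigma(T)$ by reversing the orientation of its root edge.
   Context: A plane tree is a planar map (embedding of a finite connected graph in the sphere up to orientation-preserving homeomorphism) with one face; vertices of degree 1 are leaves, others inner vertices. An eulerian tree is a plane tree rooted at a leaf, whose leaves are coloured black or white, such that every inner vertex has even degree, every inner vertex of degree $2i$ is adjacent to exactly $i-1$ white leaves, and the root leaf is black; such a tree has exactly two more black leaves than white leaves. Two eulerian trees are conjugate if one is obtained from the other by changing which black leaf is the root. The word $\omega(T)$ of an eulerian tree $T$ is the word over $\{b,w\}$ obtained by following the border of the tree counterclockwise, ending at the root leaf, writing $b$ for each black leaf and $w$ for each white leaf. Reading $w$ as an opening and $b$ as a closing bracket, a word is correct if in every prefix the number of $w$'s is at least the number of $b$'s; in a correct word each $w$ is matched with a $b$, which induces a matching between leaves. In each conjugacy class there are exactly two rooted trees with $\omega(T)=p_1bp_2b$ where $p_1,p_2$ are correct bracketing words; the corresponding two root leaves are called the free leaves, and a tree is balanced if it is rooted at a free leaf. The closure $\sigma(T)$ of a balanced eulerian tree $T$ is obtained by: (1) going counterclockwise around the tree, merging each white leaf with the black leaf it is matched to in the bracketing word (forming an edge); (2) merging the two free leaves into an edge, and rooting the resulting map on this edge oriented from (the side of) the root leaf. *)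

(* Defs.v *)
From mathcomp Require Import all_boot fingroup perm.
Set Implicit Arguments. Unset Strict Implicit. Unset Printing Implicit Defensive.

(* A rooted leaf-coloured plane tree on the dart set D:
   tsg = rotation of darts around their vertex (counterclockwise),
   tal = fixed-point-free involution pairing the two darts of an edge,
   twhite d = true iff the leaf whose unique dart is d is white,
   troot = the dart of the root leaf. *)
Record etree (D : finType) := ETree {
  tsg : {perm D}; tal : {perm D}; twhite : D -> bool; troot : D }.

Section Trees.
Variable D : finType.
Implicit Type T : etree D.

Definition tphi T : D -> D := fun d => tsg T (tal T d).

Definition leafd T (d : D) : bool := tsg T d == d.

Definition vdeg T (d : D) : nat := fingraph.order (tsg T) d.

Definition is_plane_tree T : Prop :=
  [/\ forall d, tal T (tal T d) = d,
      forall d, tal T d != d,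
      forall d e, fconnect (tphi T) d e                 (* one face (hence connected) *)
    & fcard (tsg T) (@predT D) + 1 = #|D| %/ 2 + 2 ]. (* V - E + F = 2 with F = 1 *)

Definition is_eulerian_tree T : Prop :=
  [/\ is_plane_tree T,
      leafd T (troot T),
      ~~ twhite T (troot T)
    & forall d, ~~ leafd T d ->
        ~~ odd (vdeg T d) /\
        #|[pred e | fconnect (tsg T) d e && leafd T (tal T e) && twhite T (tal T e)]|
          = (vdeg T d)./2 - 1 ].

(* leaves met along the border, starting just after the root, ending at the root *)
Definition leafseq T : seq D :=
  filter (leafd T) (traject (tphi T) (tphi T (troot T)) #|D|).

(* the word omega(T): true = w, false = b *)
Definition word T : seq bool := map (twhite T) (leafseq T).

Definition reroot T (r : D) : etree D := ETree (tsg T) (tal T) (twhite T) r.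

End Trees.

(* correct bracketing words: w opens, b closes *)
Definition correct (w : seq bool) : Prop :=
  forall k, count negb (take k w) <= count id (take k w).

Definition balanced (D : finType) (T : etree D) : Prop :=
  exists p1 p2, [/\ correct p1, correct p2 & word T = p1 ++ false :: p2 ++ [:: false]].

(* bracket matching of a word by the usual stack algorithm: list of pairs
   (position of w, position of the b matched to it) *)
Fixpoint mtch (s : seq bool) (i : nat) (stk : seq nat) : seq (nat * nat) :=
  match s with
  | [::] => [::]
  | c :: s' =>
      if c then mtch s' i.+1 (i :: stk)
      else match stk with
           | [::] => mtch s' i.+1 [::]
           | j :: stk' => (j, i) :: mtch s' i.+1 stk'
           end
  end.

Definition matching (w : seq bool) := mtch w 0 [::].

Definition matched_in (M : seq (nat * nat)) (i : nat) : bool :=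
  has (fun p => (p.1 == i) || (p.2 == i)) M.

(* position of the leaf merged with the leaf at position i: its matched leaf,
   or, for an unmatched (free) leaf, the other unmatched leaf *)
Definition mate_idx (w : seq bool) (i : nat) : nat :=
  let M := matching w in
  match [seq p.2 | p <- M & p.1 == i] ++ [seq p.1 | p <- M & p.2 == i] with
  | j :: _ => j
  | [::] => head i [seq k <- iota 0 (size w) | (k != i) && ~~ matched_in M k]
  end.

(* a rooted map given on a sub-dart-set of D *)
Record pmap (D : finType) := PMap {
  pdarts : {set D}; ps : D -> D; pa : D -> D; proot : D }.

(* the closure sigma(T): leaf darts are removed, each inner dart pointing to a
   leaf is glued to the inner dart pointing to the leaf it is merged with;
   root = inner dart adjacent to the root leaf (edge oriented from its side) *)
Definition sclosure (D : finType) (T : etree D) : pmap D :=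
  let L := leafseq T in
  let w := word T in
  PMap [set d | ~~ leafd T d] (tsg T)
       (fun d => let l := tal T d in
                 if leafd T l then tal T (nth l L (mate_idx w (index l L)))
                 else tal T d)
       (tal T (troot T)).

Definition reverse_root (D : finType) (M : pmap D) : pmap D :=
  PMap (pdarts M) (ps M) (pa M) (pa M (proot M)).

Definition rmap_iso (D : finType) (M1 M2 : pmap D) : Prop :=
  exists f : D -> D,
    [/\ {in pdarts M1 &, injective f},
        f @: pdarts M1 = pdarts M2,
        {in pdarts M1, forall d, f (ps M1 d) = ps M2 (f d)},
        {in pdarts M1, forall d, f (pa M1 d) = pa M2 (f d)}
      & f (proot M1) = proot M2].

(* Main.v *)
Require Import Defs.
From mathcomp Require Import all_boot fingroup perm.
From mathcomp Require Import zify.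
Set Implicit Arguments. Unset Strict Implicit. Unset Printing Implicit Defensive.

Fixpoint st (s : seq bool) (i : nat) (stk : seq nat) : seq nat :=
  match s with
  | [::] => stk
  | c :: s' =>
      if c then st s' i.+1 (i :: stk)
      else match stk with
           | [::] => st s' i.+1 [::]
           | j :: stk' => st s' i.+1 stk'
           end
  end.

Lemma mtch_cat u s i stk :
  mtch (u ++ s) i stk = mtch u i stk ++ mtch s (i + size u) (st u i stk).
Proof.
elim: u i stk => [|c u IH] i stk /=; first by rewrite addn0.
case: c => /=; first by rewrite IH addSnnS.
by case: stk => [|j stk] /=; rewrite IH addSnnS.
Qed.

Fixpoint okb (u : seq bool) (n : nat) : bool :=
  match u with
  | [::] => true
  | true :: u' => okb u' n.+1
  | false :: u' => (0 < n) && okb u' n.-1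
  end.

Lemma correct_okb u n :
  (forall k, count negb (take k u) <= count id (take k u) + n) -> okb u n.
Proof.
elim: u n => [|c u IH] n //= H.
case: c H => H.
  apply: IH => k; have := H k.+1; rewrite /=; lia.
have := H 1; rewrite /= take0 /= => H1.
apply/andP; split; first lia.
apply: IH => k; have := H k.+1; rewrite /=; lia.
Qed.

Lemma mtch_stk u i stk0 stk : okb u (size stk0) ->
  mtch u i (stk0 ++ stk) = mtch u i stk0 /\ st u i (stk0 ++ stk) = st u i stk0 ++ stk.
Proof.
elim: u i stk0 => [|c u IH] i stk0 //=.
case: c => /=.
  by move=> H; have := IH i.+1 (i :: stk0) H.
case: stk0 => [|j stk0] //= H.
by have [-> ->] := IH i.+1 stk0 H.
Qed.

Lemma st_size u i stk : okb u (size stk) ->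
  size (st u i stk) + count negb u = size stk + count id u.
Proof.
elim: u i stk => [|c u IH] i stk /=; first by rewrite !addn0.
case: c => /=.
  move=> H; have := IH i.+1 (i :: stk) H; rewrite /=; lia.
case: stk => [|j stk] //= H.
have := IH i.+1 stk H; lia.
Qed.

Definition shiftP (j : nat) (M : seq (nat * nat)) := [seq (p.1 + j, p.2 + j) | p <- M].

Lemma mtch_shift u i stk j :
  mtch u (i + j) [seq x + j | x <- stk] = shiftP j (mtch u i stk).
Proof.
elim: u i stk => [|c u IH] i stk //=.
case: c => /=; first by rewrite -addSn (IH i.+1 (i :: stk)).
case: stk => [|x stk] /=.
  by rewrite -addSn (IH i.+1 [::]).
by rewrite -addSn (IH i.+1 stk).
Qed.

Lemma mtch_bound u i stk : all (fun j => j < i) stk ->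
  forall p, p \in mtch u i stk -> (p.1 < i + size u) && (p.2 < i + size u).
Proof.
elim: u i stk => [|c u IH] i stk //=.
case: c => /=.
  move=> H p Hp; have := IH i.+1 (i :: stk) _ p Hp.
  rewrite addSnnS; apply; rewrite /= ltnSn /=.
  by apply/allP => x /(allP H) /ltnW.
case: stk => [|x stk] /=.
  move=> _ p Hp; have := IH i.+1 [::] isT p Hp; by rewrite addSnnS.
move=> /andP [Hx H] p; rewrite inE => /orP [/eqP -> /=|Hp].
  apply/andP; split; lia.
have := IH i.+1 stk _ p Hp; rewrite addSnnS; apply.
by apply/allP => y /(allP H) /ltnW.
Qed.

Lemma mtch_matched u i stk : okb u (size stk) ->
  forall k, (i <= k < i + size u) || (k \in stk) ->
  matched_in (mtch u i stk) k || (k \in st u i stk).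
Proof.
elim: u i stk => [|c u IH] i stk /=.
  by move=> _ k; rewrite addn0; case: ltnP => //= H; rewrite ltnNge H andbF.
case: c => /=.
  move=> H k Hk; apply: (IH i.+1 (i :: stk) H).
  rewrite inE; case: (eqVneq k i) => [->|ne]; first by rewrite orbT.
  move: Hk; rewrite /=; case/orP => [Hk|->]; last by rewrite orbT.
  apply/orP; left; move: ne Hk; lia.
case: stk => [|j stk] //= H k Hk.
rewrite /matched_in /= -/(matched_in _ k).
case: (eqVneq k i) => [->|ne]; first by rewrite !orbT.
case: (eqVneq k j) => [->|nej]; first by rewrite ?eqxx.
rewrite /=; apply: IH => //.
move: Hk; rewrite inE (negbTE nej) /=; case/orP => [Hk|->]; last by rewrite orbT.
apply/orP; left; move: ne Hk; lia.
Qed.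

Definition mate_in (M : seq (nat * nat)) (i : nat) : seq nat :=
  [seq p.2 | p <- M & p.1 == i] ++ [seq p.1 | p <- M & p.2 == i].

Lemma mate_idxE w i : mate_idx w i =
  match mate_in (matching w) i with
  | j :: _ => j
  | [::] => head i [seq k <- iota 0 (size w) | (k != i) && ~~ matched_in (matching w) k]
  end.
Proof. by []. Qed.

Definition noi (M : seq (nat * nat)) i :=
  all (fun p : nat * nat => (p.1 != i) && (p.2 != i)) M.

Lemma noi_filter M i : noi M i ->
  [seq p <- M | p.1 == i] = [::] /\ [seq p <- M | p.2 == i] = [::].
Proof.
elim: M => [|p M IH] //= /andP [/andP [h1 h2] /IH [-> ->]].
by rewrite (negbTE h1) (negbTE h2).
Qed.

Lemma mate_in_nil M i : noi M i -> mate_in M i = [::].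
Proof. by move=> /noi_filter [h1 h2]; rewrite /mate_in h1 h2. Qed.

Lemma mate_in_catl M1 M2 i : noi M2 i -> mate_in (M1 ++ M2) i = mate_in M1 i.
Proof.
move=> /noi_filter [h1 h2]; rewrite /mate_in !filter_cat h1 h2 !cats0 //.
Qed.

Lemma mate_in_catr M1 M2 i : noi M1 i -> mate_in (M1 ++ M2) i = mate_in M2 i.
Proof.
move=> /noi_filter [h1 h2]; rewrite /mate_in !filter_cat h1 h2 //.
Qed.

Lemma mate_in_shift M j x :
  mate_in (shiftP j M) (x + j) = [seq y + j | y <- mate_in M x].
Proof.
rewrite /mate_in map_cat; congr (_ ++ _).
  elim: M => [|p M IH] //=; rewrite eqn_add2r; case: (p.1 == x) => //=.
  by rewrite IH.
elim: M => [|p M IH] //=; rewrite eqn_add2r; case: (p.2 == x) => //=.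
by rewrite IH.
Qed.

Lemma matched_mate M k : matched_in M k = (mate_in M k != [::]).
Proof.
rewrite /matched_in /mate_in -size_eq0 size_cat !size_map !size_filter.
elim: M => [|p M IH] //=.
case: (p.1 == k) => //=; case: (p.2 == k) => //=; lia.
Qed.

Definition bnd (M : seq (nat * nat)) b := forall p, p \in M -> (p.1 < b) && (p.2 < b).

Lemma mate_in_bound M b i : bnd M b -> forall x, x \in mate_in M i -> x < b.
Proof.
move=> H x; rewrite /mate_in mem_cat => /orP [] /mapP [p];
  rewrite mem_filter => /andP [_ /H /andP [h1 h2]] ->//.
Qed.

Lemma noi_bound M b i : bnd M b -> b <= i -> noi M i.
Proof.
move=> H hb; apply/allP => p /H /andP [h1 h2].
by rewrite !ltn_eqF // ?(leq_trans h1 hb) ?(leq_trans h2 hb).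
Qed.

Lemma noi_shift M j i : i < j -> noi (shiftP j M) i.
Proof.
move=> h; apply/allP => p /mapP [q _ ->] /=.
by rewrite !gtn_eqF // ltn_addl.
Qed.

Lemma noi_shift2 M b j i : bnd M b -> b + j <= i -> noi (shiftP j M) i.
Proof.
move=> H h; apply/allP => p /mapP [q /H /andP [h1 h2] ->] /=.
by rewrite !ltn_eqF // (leq_trans _ h) // ltn_add2r.
Qed.

Definition dyck (u : seq bool) := okb u 0 && (count negb u == count id u).

Lemma dyck_st u i : dyck u -> st u i [::] = [::].
Proof.
move=> /andP [h1 /eqP h2]; have := @st_size u i [::] h1; rewrite h2 /= => h.
by move/eqP: h; rewrite eqn_add2r size_eq0 => /eqP.
Qed.

Lemma dyck_matched u k : dyck u -> k < size u -> matched_in (matching u) k.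
Proof.
move=> hd hk; have /andP [h1 _] := hd.
have H : (0 <= k < 0 + size u) || (k \in [::]) by rewrite add0n hk.
by have := @mtch_matched u 0 [::] h1 k H; rewrite dyck_st // in_nil orbF.
Qed.

Lemma dyck_bound u : bnd (matching u) (size u).
Proof. by move=> p hp; have := @mtch_bound u 0 [::] isT p hp. Qed.

Lemma matching_ubvb u v : dyck u -> dyck v ->
  matching (u ++ false :: v ++ [:: false]) = matching u ++ shiftP (size u).+1 (matching v).
Proof.
move=> hu hv; rewrite /matching mtch_cat dyck_st //= mtch_cat dyck_st //= cats0.
by rewrite -(mtch_shift v 0 [::]).
Qed.

Lemma matched_shift M j k : matched_in (shiftP j M) (k + j) = matched_in M k.
Proof. by rewrite !matched_mate mate_in_shift; case: (mate_in M k). Qed.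

Lemma matched_ubvb u v k : dyck u -> dyck v -> k < size u + size v + 2 ->
  matched_in (matching (u ++ false :: v ++ [:: false])) k =
  (k != size u) && (k != size u + size v + 1).
Proof.
move=> hu hv hk; rewrite matching_ubvb //.
case: (ltngtP k (size u)) => h1.
- rewrite matched_mate mate_in_catl; last by apply: noi_shift; lia.
  rewrite -matched_mate dyck_matched //; apply/esym/andP; split; apply/eqP; lia.
- have ek : k = (k - (size u).+1) + (size u).+1 by lia.
  rewrite [in LHS]ek matched_mate mate_in_catr; last by apply: noi_bound (@dyck_bound u) _; lia.
  rewrite -matched_mate matched_shift.
  case: (ltnP (k - (size u).+1) (size v)) => h2.
    rewrite dyck_matched //; apply/esym/andP; split; apply/eqP; lia.
  rewrite matched_mate mate_in_nil; last by apply: noi_bound (@dyck_bound v) _.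
  apply/esym/negbTE; rewrite negb_and !negbK; apply/orP; right; apply/eqP; lia.
- rewrite h1 ?eqxx /= matched_mate mate_in_catl; last by apply: noi_shift; lia.
  by rewrite mate_in_nil //; apply: noi_bound (@dyck_bound u) _.
Qed.

Lemma L1 u v i : dyck u -> dyck v -> i < size u ->
  exists m, [/\ m < size u,
    mate_idx (u ++ false :: v ++ [:: false]) i = m &
    mate_idx (v ++ false :: u ++ [:: false]) ((size v).+1 + i) = (size v).+1 + m].
Proof.
move=> hu hv hi.
have hm : matched_in (matching u) i by apply: dyck_matched.
rewrite matched_mate in hm.
case E: (mate_in (matching u) i) hm => [|m rest] // _.
exists m; split.
- by apply: (mate_in_bound (@dyck_bound u) (i := i)); rewrite E inE eqxx.
- rewrite mate_idxE matching_ubvb // mate_in_catl ?E //.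
  by apply: noi_shift; lia.
- rewrite mate_idxE matching_ubvb // mate_in_catr; last first.
    by apply: noi_bound (@dyck_bound v) _; lia.
  by rewrite addnC mate_in_shift E /= addnC.
Qed.

Lemma filter_iota1 n x (P : pred nat) :
  x < n -> {in iota 0 n, P =1 pred1 x} -> [seq k <- iota 0 n | P k] = [:: x].
Proof.
move=> hx hP; rewrite (eq_in_filter hP) filter_pred1_uniq ?iota_uniq //.
by rewrite mem_iota.
Qed.

Lemma L2 u v : dyck u -> dyck v ->
  mate_idx (u ++ false :: v ++ [:: false]) (size u) = size u + size v + 1 /\
  mate_idx (u ++ false :: v ++ [:: false]) (size u + size v + 1) = size u.
Proof.
move=> hu hv.
have hsz : size (u ++ false :: v ++ [:: false]) = size u + size v + 2.
  by rewrite size_cat /= size_cat /=; lia.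
split; rewrite mate_idxE.
- rewrite matching_ubvb // mate_in_catl; last by apply: noi_shift.
  rewrite mate_in_nil; last by apply: noi_bound (@dyck_bound u) _.
  rewrite -matching_ubvb // hsz (@filter_iota1 _ (size u + size v + 1)) //; first lia.
  move=> k; rewrite mem_iota add0n => hk /=.
  rewrite matched_ubvb //; case: (eqVneq k (size u)) => //= [->|h1]; first by apply/esym/eqP; lia.
  by case: (eqVneq k (size u + size v + 1)).
- rewrite matching_ubvb // mate_in_catr; last by apply: noi_bound (@dyck_bound u) _; lia.
  rewrite mate_in_nil; last first.
    by apply: noi_shift2 (@dyck_bound v) _; lia.
  rewrite -matching_ubvb // hsz (@filter_iota1 _ (size u)) //; first lia.
  move=> k; rewrite mem_iota add0n => hk /=.
  rewrite matched_ubvb //; case: (eqVneq k (size u + size v + 1)) => //= [->|h1].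
    by apply/esym/eqP; lia.
  by case: (eqVneq k (size u)).
Qed.

Lemma okb_prefix u n : okb u n -> forall m,
  count negb (take m u) <= count id (take m u) + n.
Proof.
elim: u n => [|c u IH] n /=; first by move=> _ [|m].
move=> H [|m] /=; first lia.
case: c H => /= H.
  by have := IH _ H m; lia.
case: n H => // n H.
by have := IH _ H m; rewrite /=; lia.
Qed.

Lemma dyck_prefix u m : dyck u -> count negb (take m u) <= count id (take m u).
Proof. by case/andP => h _; have := okb_prefix h m; rewrite addn0. Qed.

Lemma dyck_cnt u : dyck u -> count negb u = count id u.
Proof. by case/andP => _ /eqP. Qed.

Lemma ubvb_prefix u v m : dyck u -> dyck v ->
  m < size (u ++ false :: v ++ [:: false]) ->
  count negb (take m (u ++ false :: v ++ [:: false])) <=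
  count id (take m (u ++ false :: v ++ [:: false])) + 1.
Proof.
move=> hu hv; rewrite size_cat /= size_cat /= => hm.
rewrite take_cat; case: ltnP => h1.
  by have := dyck_prefix m hu; lia.
case E: (m - size u) => [|m'] /=.
  by rewrite cats0 (dyck_cnt hu); lia.
rewrite take_cat; case: ltnP => h2.
  rewrite !count_cat /= (dyck_cnt hu).
  by have := dyck_prefix m' hv; lia.
have -> : m' - size v = 0 by lia.
rewrite /= cats0 !count_cat /= (dyck_cnt hu) (dyck_cnt hv); lia.
Qed.

Lemma drop_excess u k : dyck u ->
  count id (drop k u) <= count negb (drop k u).
Proof.
move=> hu; have := dyck_prefix k hu; have := dyck_cnt hu.
have e1 := count_cat negb (take k u) (drop k u).
have e2 := count_cat id (take k u) (drop k u).
rewrite cat_take_drop in e1 e2; lia.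
Qed.

Lemma rot_pos u v u' v' k : dyck u -> dyck v -> dyck u' -> dyck v' ->
  rot k (u ++ false :: v ++ [:: false]) = u' ++ false :: v' ++ [:: false] ->
  0 < k < size (u ++ false :: v ++ [:: false]) -> k = (size u).+1.
Proof.
move=> hu hv hu' hv' E hk.
case: (eqVneq k (size u).+1) => // hne; exfalso.
have hsz : size (u ++ false :: v ++ [:: false]) = size u + size v + 2.
  by rewrite size_cat /= size_cat /=; lia.
rewrite hsz in hk.
have [P [Q [e1 e2 e3]]] : exists P Q,
   [/\ rot k (u ++ false :: v ++ [:: false]) = P ++ Q,
       size P < size u + size v + 2 &
       count id P + 2 <= count negb P].
  case: (leqP k (size u)) => h.
  - exists (drop k u ++ false :: v ++ [:: false]), (take k u); split.
    + have -> : u ++ false :: v ++ [:: false] =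
                take k u ++ (drop k u ++ false :: v ++ [:: false]).
        by rewrite catA cat_take_drop.
      have sk : size (take k u) = k by rewrite size_takel.
      by rewrite -{1}sk rot_size_cat.
    + rewrite size_cat /= size_cat size_drop /=; lia.
    + rewrite !count_cat /= !count_cat /= (dyck_cnt hv).
      have := drop_excess k hu; lia.
  - set j := k - (size u).+1.
    exists (drop j v ++ false :: u ++ [:: false]), (take j v); split.
    + have -> : u ++ false :: v ++ [:: false] =
                (u ++ false :: take j v) ++ (drop j v ++ [:: false]).
        by rewrite -catA /= catA cat_take_drop.
      have sk : size (u ++ false :: take j v) = k.
        rewrite size_cat /= size_takel /j; lia.
      rewrite -{1}sk rot_size_cat -!catA /=. by rewrite -catA.
    + rewrite size_cat /= size_cat size_drop /= /j; lia.
    + rewrite !count_cat /= !count_cat /= (dyck_cnt hu).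
      have := drop_excess j hv; lia.
have hs : size (u' ++ false :: v' ++ [:: false]) = size u + size v + 2.
  by rewrite -E size_rot hsz.
have := @ubvb_prefix u' v' (size P) hu' hv'.
rewrite hs => /(_ e2); rewrite -E e1 take_size_cat //; lia.
Qed.

Section Mate.
Variable D : eqType.
Variable wh : D -> bool.

Definition mate (L : seq D) (l : D) := nth l L (mate_idx (map wh L) (index l L)).

Lemma word_AB (A B : seq D) u v : map wh A = rcons u false -> map wh B = rcons v false ->
  map wh (A ++ B) = u ++ false :: v ++ [:: false].
Proof. by move=> hA hB; rewrite map_cat hA hB cat_rcons cats1. Qed.

Lemma size_AB (A : seq D) u : map wh A = rcons u false -> size A = (size u).+1.
Proof. by move=> hA; rewrite -(size_map wh) hA size_rcons. Qed.

Lemma mate_swap (A B : seq D) u v l : dyck u -> dyck v ->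
  map wh A = rcons u false -> map wh B = rcons v false -> uniq (A ++ B) ->
  l \in A -> mate (A ++ B) l = mate (B ++ A) l.
Proof.
move=> hu hv hA hB hU lA.
have sA := size_AB hA; have sB := size_AB hB.
have lB : l \notin B.
  apply/negP => lB; move: hU; rewrite cat_uniq => /and3P [_ /hasPn H _].
  by move: (H l lB); rewrite lA.
rewrite /mate (word_AB hA hB) (word_AB hB hA) !index_cat lA (negbTE lB).
have : index l A < size A by rewrite index_mem.
set i := index l A => hi.
case: (ltnP i (size u)) => h.
  have [m [hm e1 e2]] := L1 hu hv h.
  rewrite sB e1 e2 !nth_cat sA sB ifT; last lia.
  rewrite ifF; last lia.
  by congr nth; lia.
have ei : i = size u by lia.
rewrite ei; have [-> _] := L2 hu hv.
have [_ h2] := L2 hv hu.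
have -> : size B + size u = size v + size u + 1 by lia.
rewrite h2 !nth_cat sA sB ifF; last lia.
rewrite ifT; last lia.
by congr nth; lia.
Qed.

Lemma mate_root (A B : seq D) u v x y : dyck u -> dyck v ->
  map wh A = rcons u false -> map wh B = rcons v false -> uniq (A ++ B) ->
  mate (A ++ B) (last x B) = last y A.
Proof.
move=> hu hv hA hB hU.
have sA := size_AB hA; have sB := size_AB hB.
have uB : uniq B by move: hU; rewrite cat_uniq => /and3P [].
have lB : last x B \in B by rewrite -(nth_last x) mem_nth // sB.
have lA : last x B \notin A.
  apply/negP => lA; move: hU; rewrite cat_uniq => /and3P [_ /hasPn H _].
  by move: (H _ lB); rewrite lA.
rewrite /mate (word_AB hA hB) index_cat (negbTE lA).
rewrite -{2}(nth_last x) index_uniq //; last by rewrite sB.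
have [_ h2] := L2 hu hv.
have -> : size A + (size B).-1 = size u + size v + 1 by lia.
rewrite h2 nth_cat sA ltnSn.
rewrite (set_nth_default y); last by rewrite sA.
by rewrite -(nth_last y) sA.
Qed.

End Mate.

Lemma traject_rot (T : Type) (f : T -> T) x n k : iter n f x = x -> k <= n ->
  traject f (iter k f x) n = rot k (traject f x n).
Proof.
move=> hx hk.
have e : n = k + (n - k) by lia.
rewrite [in RHS]e trajectD.
have := rot_size_cat (traject f x k) (traject f (iter k f x) (n - k)).
rewrite size_traject => ->.
rewrite [in LHS](_ : n = (n - k) + k); last lia.
rewrite trajectD; congr (_ ++ _).
by rewrite -iterD subnK // hx.
Qed.

Lemma filter_rot (T : Type) (a : pred T) s k :
  filter a (rot k s) = rot (count a (take k s)) (filter a s).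
Proof.
have -> : filter a s = filter a (take k s) ++ filter a (drop k s).
  by rewrite -filter_cat cat_take_drop.
by rewrite -size_filter rot_size_cat /rot filter_cat.
Qed.

Section Tree.
Variable D : finType.
Variable T : etree D.

Lemma tphi_inj : injective (tphi T).
Proof. by move=> x y /perm_inj /perm_inj. Qed.

Hypothesis PT : is_plane_tree T.

Lemma order_phi x : fingraph.order (tphi T) x = #|D|.
Proof.
case: PT => _ _ hc _; rewrite /fingraph.order; apply: eq_card => y.
by rewrite !inE hc.
Qed.

Definition traj (r : D) := traject (tphi T) (tphi T r) #|D|.

Lemma traj_uniq r : uniq (traj r).
Proof. by have := orbit_uniq (tphi T) (tphi T r); rewrite /orbit order_phi. Qed.

Lemma mem_traj r d : d \in traj r.
Proof.
case: PT => _ _ hc _.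
by have := hc (tphi T r) d; rewrite fconnect_orbit /orbit order_phi.
Qed.

Lemma traj_rcons r : exists s, traj r = rcons s r.
Proof.
have hD : 0 < #|D| by apply/card_gt0P; exists r.
have e : #|D| = #|D|.-1.+1 by rewrite prednK.
exists (traject (tphi T) (tphi T r) #|D|.-1).
rewrite /traj; rewrite [X in traject _ _ X]e trajectSr -iterSr -e.
by have := @iter_order _ _ tphi_inj r; rewrite order_phi => ->.
Qed.

Lemma traj_rot r r' : exists k, traj r' = rot k (traj r).
Proof.
case: PT => _ _ hc _.
have h := hc (tphi T r) (tphi T r').
exists (findex (tphi T) (tphi T r) (tphi T r')).
rewrite /traj -{1}(iter_findex h) traject_rot //.
  by have := @iter_order _ _ tphi_inj (tphi T r); rewrite order_phi.
by apply: ltnW; have := findex_max h; rewrite order_phi.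
Qed.

End Tree.

Lemma cardS (D : finType) (A : {pred D}) : #|A| = \sum_(d : D) (d \in A : nat).
Proof. by rewrite -sum1_card big_mkcond; apply: eq_bigr => d _; case: (d \in A). Qed.

Section Count.
Variable D : finType.
Variable T : etree D.
Hypothesis PT : is_plane_tree T.
Hypothesis HD : forall d, ~~ leafd T d -> ~~ odd (vdeg T d) /\
  #|[pred e | fconnect (tsg T) d e && leafd T (tal T e) && twhite T (tal T e)]|
    = (vdeg T d)./2 - 1.

Local Notation s := (tsg T).
Local Notation a := (tal T).

Lemma conn_sym : connect_sym (frel s).
Proof. exact: fconnect_sym perm_inj. Qed.

Lemma leaf_conn x y : leafd T x -> fconnect s x y -> y = x.
Proof. by move=> /eqP hx /iter_findex <-; apply: iter_fix. Qed.

Lemma inner_conn x y : ~~ leafd T x -> fconnect s x y -> ~~ leafd T y.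
Proof.
move=> hx hxy; apply/negP => hy.
have hyx : fconnect s y x by rewrite conn_sym.
have := leaf_conn hy hyx.
by move=> e; rewrite e hy in hx.
Qed.

Lemma root_leaf x : leafd T x -> froot s x = x.
Proof. by move=> hx; apply: leaf_conn hx (connect_root _ _). Qed.

Lemma card_even : #|D| = 2 * #|[pred d | index d (enum D) < index (a d) (enum D)]|.
Proof.
case: PT => inv nfix _ _.
have e1 : \sum_(d : D) ((index d (enum D) < index (a d) (enum D)) : nat) =
          \sum_(d : D) ((index (a d) (enum D) < index d (enum D)) : nat).
  rewrite (reindex_inj (@perm_inj _ (tal T))) /=.
  by apply: eq_bigr => d _; rewrite inv.
rewrite !cardS mul2n -addnn.
rewrite [X in _ = _ + X](_ : _ = \sum_(d : D) ((index (a d) (enum D) < index d (enum D)) : nat)); last first.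
  by rewrite -e1.
rewrite -big_split; apply: eq_bigr => d _ /=.
rewrite !inE.
have : index d (enum D) != index (a d) (enum D).
  apply/negP => /eqP /(index_inj d) e; move: (nfix d).
  by rewrite -e ?mem_enum ?eqxx.
by case: ltngtP.
Qed.

Definition Qr (r : D) := roots (frel s) r && ~~ leafd T r.

Lemma part (F : D -> nat) :
  \sum_(d | ~~ leafd T d) F d = \sum_(r | Qr r) \sum_(d | fconnect s r d) F d.
Proof.
rewrite (partition_big (fun d => froot s d) Qr).
  apply: eq_bigr => r /andP [hr hi]; apply: eq_bigl => d.
  have -> : (froot s d == r) = (froot s d == froot s r) by rewrite (eqP hr).
  rewrite root_connect; last exact: conn_sym.
  rewrite [fconnect s d r]conn_sym.
  case h: (fconnect s r d); rewrite ?andbF ?andbT //.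
  exact: inner_conn hi h.
move=> d hd; rewrite /Qr roots_root; last exact: conn_sym.
exact: inner_conn hd (connect_root _ _).
Qed.

Lemma leaf_count :
  #|[pred d | leafd T d]| =
  2 * #|[pred d | ~~ leafd T d && leafd T (a d) && twhite T (a d)]| + 2.
Proof.
set L := #|[pred d | leafd T d]|.
set W := #|[pred d | ~~ leafd T d && leafd T (a d) && twhite T (a d)]|.
set I := #|[pred d | ~~ leafd T d]|.
set q := #|[pred r | Qr r]|.
have hW : W = \sum_(d | ~~ leafd T d) ((leafd T (a d) && twhite T (a d)) : nat).
  rewrite /W cardS [RHS]big_mkcond; apply: eq_bigr => d _; rewrite !inE.
  by case: (leafd T d).
have hS2 : \sum_(d | ~~ leafd T d) ((leafd T (a d) && twhite T (a d)) : nat) =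
           \sum_(r | Qr r) ((vdeg T r)./2 - 1).
  rewrite part; apply: eq_bigr => r /andP [_ hi].
  rewrite -(proj2 (HD hi)) cardS [LHS]big_mkcond; apply: eq_bigr => d _; rewrite !inE.
  by case: (fconnect s r d).
have hS1 : I = \sum_(r | Qr r) vdeg T r.
  have -> : I = \sum_(d | ~~ leafd T d) 1.
    by rewrite /I -sum1_card; apply: eq_bigl => d; rewrite inE.
  rewrite part; apply: eq_bigr => r _.
  by rewrite /vdeg /fingraph.order -sum1_card.
have hq : forall r, Qr r -> vdeg T r = 2 * ((vdeg T r)./2 - 1) + 2.
  move=> r /andP [_ hi]; have [ho _] := HD hi.
  have h0 := fingraph.order_gt0 s r.
  have h := odd_double_half (vdeg T r).
  rewrite (negbTE ho) add0n -mul2n in h.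
  rewrite /vdeg in h h0 *; lia.
have hI : I = 2 * W + 2 * q.
  rewrite hS1 hW hS2 (eq_bigr _ hq) big_split /= -big_distrr /=.
  congr (_ + _); rewrite /q cardS [LHS]big_mkcond big_distrr /=.
  by apply: eq_bigr => r _; rewrite inE; case: (Qr r).
have hV : fcard s predT = q + L.
  rewrite /q /L /n_comp_mem !cardS -big_split; apply: eq_bigr => d _; rewrite !inE /Qr.
  case hl: (leafd T d) => /=.
    by rewrite /roots root_leaf // eqxx.
  by rewrite andbT addn0.
have hDc : #|D| = I + L.
  rewrite /I /L !cardS -big_split; apply: eq_bigr => d _; rewrite !inE.
  by case: (leafd T d).
case: PT => _ _ _ eu.
have hE := card_even.
rewrite hE mulKn // in eu.
lia.
Qed.

End Count.

Lemma count_traj (D : finType) (T : etree D) r (P : pred D) :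
  is_plane_tree T -> count P (traj T r) = #|P|.
Proof.
move=> PT; rewrite -sum1_count -sum1_card.
rewrite (perm_big (index_enum D)); last first.
  apply: uniq_perm; first exact: traj_uniq.
    exact: index_enum_uniq.
  by move=> x; rewrite mem_traj // mem_index_enum.
by apply: eq_bigl => x.
Qed.

Lemma bal_dyck w p1 p2 : w = p1 ++ false :: p2 ++ [:: false] ->
  correct p1 -> correct p2 -> count negb w = count id w + 2 -> dyck p1 /\ dyck p2.
Proof.
move=> -> c1 c2; rewrite !count_cat /= !count_cat /= => h.
have h1 := c1 (size p1); have h2 := c2 (size p2).
rewrite !take_size in h1 h2.
have o1 : okb p1 0 by apply: correct_okb => k; rewrite addn0; exact: c1.
have o2 : okb p2 0 by apply: correct_okb => k; rewrite addn0; exact: c2.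
by split; apply/andP; split => //; apply/eqP; lia.
Qed.

Lemma word_count (D : finType) (T : etree D) :
  is_eulerian_tree T -> balanced T -> count negb (word T) = count id (word T) + 2.
Proof.
case=> PT hr hb HD [p1 [p2 [c1 c2 hw]]].
have LC := leaf_count PT HD.
have hsz : size (word T) = #|[pred d | leafd T d]|.
  by rewrite size_map size_filter count_traj.
have hid : count id (word T) = #|[pred d | leafd T d && twhite T d]|.
  rewrite count_map count_filter.
  transitivity (count [pred d | leafd T d && twhite T d] (traj T (troot T))).
    by apply: eq_count => d /=; rewrite andbC.
  exact: count_traj.
have noWL : forall l, leafd T l -> twhite T l -> ~~ leafd T (tal T l).
  move=> l hl wl; apply/negP => hal.
  have [inv _ hc _] := PT.
  have all2 : forall n, (iter n (tphi T) l == l) || (iter n (tphi T) l == tal T l).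
    elim=> [|n IH] /=; first by rewrite eqxx.
    case/orP: IH => /eqP ->.
      by rewrite /tphi (eqP hal) eqxx orbT.
    by rewrite /tphi inv (eqP hl) eqxx.
  have allleaf : forall d, leafd T d.
    move=> d; have := all2 (findex (tphi T) l d); rewrite iter_findex ?hc //.
    by case/orP => /eqP ->.
  have W0 : #|[pred d | ~~ leafd T d && leafd T (tal T d) && twhite T (tal T d)]| = 0.
    by rewrite cardS big1 // => d _; rewrite inE allleaf.
  rewrite W0 in LC.
  have : size (word T) = 2 by rewrite hsz LC.
  rewrite hw size_cat /= size_cat /= => hs.
  have e1 : p1 = [::] by apply/nilP; rewrite /nilp; lia.
  have e2 : p2 = [::] by apply/nilP; rewrite /nilp; lia.
  rewrite e1 e2 /= in hw.
  have : twhite T l \in word T.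
    by apply: map_f; rewrite /leafseq mem_filter hl (mem_traj PT).
  by rewrite hw wl.
have hW : #|[pred d | ~~ leafd T d && leafd T (tal T d) && twhite T (tal T d)]|
        = #|[pred d | leafd T d && twhite T d]|.
  have [inv _ _ _] := PT.
  rewrite !cardS (reindex_inj (@perm_inj _ (tal T))) /=; apply: eq_bigr => d _.
  rewrite !inE inv.
  case hl: (leafd T d); case wl: (twhite T d); rewrite ?andbF ?andbT //=.
  by rewrite (noWL d hl wl).
have hp := count_predC id (word T).
have e : count (predC id) (word T) = count negb (word T) by apply: eq_count.
lia.
Qed.

Lemma take_ubvb (p1 p2 : seq bool) :
  take (size p1).+1 (p1 ++ false :: p2 ++ [:: false]) = rcons p1 false.
Proof. by rewrite take_cat ltnNge leqnSn /= subSnn /= take0 cats1. Qed.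

Lemma drop_ubvb (p1 p2 : seq bool) :
  drop (size p1).+1 (p1 ++ false :: p2 ++ [:: false]) = rcons p2 false.
Proof. by rewrite drop_cat ltnNge leqnSn /= subSnn /= drop0 cats1. Qed.

Unset Implicit Arguments.
Theorem mainTheorem4 (D : finType) (T : etree D) (r' : D) :
  is_eulerian_tree T -> balanced T ->
  r' != troot T -> is_eulerian_tree (reroot T r') -> balanced (reroot T r') ->
  rmap_iso (sclosure (reroot T r')) (reverse_root (sclosure T)).
Proof.
move=> E1 B1 hne E2 B2.
have [PT hr _ _] := E1.
have [_ hr' _ _] := E2.
have [inv _ _ _] := PT.
have [p1 [p2 [c1 c2 hw]]] := B1.
have [dp1 dp2] := bal_dyck hw c1 c2 (word_count E1 B1).
have [q1 [q2 [c1' c2' hw']]] := B2.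
have [dq1 dq2] := bal_dyck hw' c1' c2' (word_count E2 B2).
set r := troot T in hr hne.
have eL : leafseq T = filter (leafd T) (traj T r) by [].
have eL' : leafseq (reroot T r') = filter (leafd T) (traj T r') by [].
have [k hk] := traj_rot PT r r'.
set k0 := count (leafd T) (take k (traj T r)).
have hL' : leafseq (reroot T r') = rot k0 (leafseq T) by rewrite eL' hk filter_rot.
have [s0 hs0] := traj_rcons PT r.
have [s0' hs0'] := traj_rcons PT r'.
have lL : leafseq T = rcons (filter (leafd T) s0) r.
  by rewrite eL hs0 filter_rcons hr.
have lL' : leafseq (reroot T r') = rcons (filter (leafd T) s0') r'.
  by rewrite eL' hs0' filter_rcons; move: hr'; rewrite /leafd /= => ->.
have uL : uniq (leafseq T) by rewrite eL filter_uniq // traj_uniq.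
have hW' : word (reroot T r') = rot k0 (word T) by rewrite /word hL' map_rot.
have hk0 : 0 < k0 < size (word T).
  apply/andP; split.
    rewrite lt0n; apply/negP => /eqP e0.
    move: hL'; rewrite e0 rot0 lL lL' => /rcons_inj [_ e].
    by rewrite e eqxx in hne.
  rewrite ltnNge; apply/negP => hle.
  move: hL'; rewrite rot_oversize; last by rewrite /word size_map in hle.
  rewrite lL lL' => /rcons_inj [_ e].
  by rewrite e eqxx in hne.
have ek0 : k0 = (size p1).+1.
  apply: (rot_pos dp1 dp2 dq1 dq2); first by rewrite -hw -hw'.
  by rewrite -hw.
set A := take k0 (leafseq T).
set B := drop k0 (leafseq T).
have eAB : leafseq T = A ++ B by rewrite cat_take_drop.
have eBA : leafseq (reroot T r') = B ++ A by rewrite hL'.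
have hA : map (twhite T) A = rcons p1 false.
  by rewrite /A map_take -/(word T) hw ek0 take_ubvb.
have hB : map (twhite T) B = rcons p2 false.
  by rewrite /B map_drop -/(word T) hw ek0 drop_ubvb.
have uAB : uniq (A ++ B) by rewrite -eAB.
have uBA : uniq (B ++ A) by rewrite uniq_catC.
exists (fun d => d); split.
- by move=> x y _ _.
- by rewrite imset_id.
- by [].
- move=> d _ /=.
  have -> : leafd (reroot T r') (tal T d) = leafd T (tal T d) by [].
  case hl: (leafd T (tal T d)) => //; congr (tal T _).
  change (mate (twhite T) (leafseq (reroot T r')) (tal T d) =
          mate (twhite T) (leafseq T) (tal T d)).
  have : tal T d \in leafseq T by rewrite eL mem_filter hl mem_traj.
  rewrite eAB eBA mem_cat => /orP [lA|lB].
    by rewrite (mate_swap dp1 dp2 hA hB uAB lA).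
  by rewrite (mate_swap dp2 dp1 hB hA uBA lB).
- rewrite /= inv hr.
  change (tal T r' = tal T (mate (twhite T) (leafseq T) r)); congr (tal T _).
  have e1 : last (last r A) B = r by rewrite -last_cat -eAB lL last_rcons.
  have e2 : last (last r' B) A = r' by rewrite -last_cat -eBA lL' last_rcons.
  rewrite eAB -[in RHS]e1 (mate_root (last r A) (last r' B) dp1 dp2 hA hB uAB).
  by rewrite e2.
Qed.
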